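(* Let $G$ be an $H(4,3)$-free graph and $u^*\in V(G)$. Put $N=N(u^* )$, $W=V(G)\setminus N[u^*]$, and $A^{+}=\{v\in N: v \text{ has at least one neighbor in } N\}$. Assume that $G[A^{+}]\cong K_4$ and that every vertex of $W$ has at most one neighbor in $A^{+}$. Let $U=\{w\in W: w \text{ has exactly one neighbor in } A^{+}\}$. Then \[ e(A^{+},W)=|U|\le \alpha(G[W]). \]
   Context: $H(4,3)$ is the graph obtained from a $4$-cycle and a triangle by identifying one vertex of the $4$-cycle with one vertex of the triangle; $H(4,3)$-free means containing no subgraph isomorphic to $H(4,3)$. $N[u^*]=N(u^* )\cup\{u^*\}$. For disjoint vertex sets $X,Y$, $e(X,Y)$ is the number of edges with one end in $X$ and the other in $Y$. $\alpha(H)$ denotes the independence number of $H$, and $G[W]$ is the subgraph induced by $W$. *)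

(* Defs.v *)
From mathcomp Require Import all_boot.
Set Implicit Arguments. Unset Strict Implicit. Unset Printing Implicit Defensive.

Definition simple_graph (T : finType) (adj : rel T) : Prop :=
  symmetric adj /\ irreflexive adj.

(* H(4,3): 4-cycle a-b-c-d-a and triangle a-e-f sharing the vertex a.
   G contains H(4,3) as a (not necessarily induced) subgraph iff there are
   six distinct vertices carrying these seven edges. *)
Definition contains_H43 (T : finType) (adj : rel T) : Prop :=
  exists a b c d e f : T,
    uniq [:: a; b; c; d; e; f] /\
    [/\ adj a b, adj b c, adj c d, adj d a & [/\ adj a e, adj e f & adj f a]].

Definition H43_free (T : finType) (adj : rel T) : Prop := ~ contains_H43 adj.

Definition nbhd (T : finType) (adj : rel T) (u : T) : {set T} :=
  [set v | adj u v].

(* e(X,Y): number of edges with one end in X and the other in Y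
   (X, Y disjoint; counted as ordered pairs (x,y) with x in X, y in Y) *)
Definition e_between (T : finType) (adj : rel T) (X Y : {set T}) : nat :=
  #|[set p : T * T | [&& p.1 \in X, p.2 \in Y & adj p.1 p.2]]|.

Definition independent (T : finType) (adj : rel T) (S : {set T}) : bool :=
  [forall x in S, forall y in S, ~~ adj x y].

Definition alpha_in (T : finType) (adj : rel T) (W : {set T}) : nat :=
  \max_(S : {set T} | (S \subset W) && independent adj S) #|S|.

Definition induced_K4 (T : finType) (adj : rel T) (A : {set T}) : Prop :=
  #|A| = 4 /\ {in A &, forall x y, x != y -> adj x y}.

(* Main.v *)
Require Import Defs.
From mathcomp Require Import all_boot.

Lemma two_others (T : finType) (A : {set T}) a :
  #|A| = 4 -> a \in A ->
  exists b c, [/\ b \in A, c \in A, b != a, c != a & b != c].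
Proof.
move=> hA ha.
have h1 : #|A :\ a| = 3 by move: (cardsD1 a A); rewrite ha hA => -[].
have : 0 < #|A :\ a| by rewrite h1.
case/card_gt0P => b; rewrite in_setD1 => /andP[ba bA].
have h2 : #|A :\ a :\ b| = 2.
  by move: (cardsD1 b (A :\ a)); rewrite in_setD1 ba bA h1 => -[].
have : 0 < #|A :\ a :\ b| by rewrite h2.
case/card_gt0P => c; rewrite !in_setD1 => /and3P[cb ca cA].
by exists b, c; split => //; rewrite eq_sym.
Qed.

Lemma two_others2 (T : finType) (A : {set T}) a a' :
  #|A| = 4 -> a \in A -> a' \in A -> a != a' ->
  exists b c, [/\ b \in A, c \in A, [&& b != a, c != a, b != a' & c != a'] & b != c].
Proof.
move=> hA ha ha' naa.
have h1 : #|A :\ a| = 3 by move: (cardsD1 a A); rewrite ha hA => -[].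
have h2 : #|A :\ a :\ a'| = 2.
  by move: (cardsD1 a' (A :\ a)); rewrite in_setD1 eq_sym naa ha' h1 => -[].
have : 0 < #|A :\ a :\ a'| by rewrite h2.
case/card_gt0P => b; rewrite !in_setD1 => /and3P[ba' ba bA].
have h3 : #|A :\ a :\ a' :\ b| = 1.
  by move: (cardsD1 b (A :\ a :\ a')); rewrite !in_setD1 ba ba' bA h2 => -[].
have : 0 < #|A :\ a :\ a' :\ b| by rewrite h3.
case/card_gt0P => c; rewrite !in_setD1 => /and4P[cb ca' ca cA].
by exists b, c; split => //; [rewrite ba ca ba' ca' | rewrite eq_sym].
Qed.

Theorem corollary4p3 (T : finType) (adj : rel T) (ustar : T) :
  simple_graph adj ->
  H43_free adj ->
  let N := nbhd adj ustar in
  let W := ~: (ustar |: N) in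
  let Aplus := [set v in N | [exists w in N, adj v w]] in
  induced_K4 adj Aplus ->
  (forall w, w \in W -> #|[set a in Aplus | adj w a]| <= 1) ->
  let U := [set w in W | #|[set a in Aplus | adj w a]| == 1] in
  e_between adj Aplus W = #|U| /\ #|U| <= alpha_in adj W.
Proof.
move=> [sym irr] hfree N W Aplus [cA kA] hle1 U.
have AN : forall a, a \in Aplus -> a \in N by move=> a; rewrite inE => /andP[].
have Nu : forall a, a \in N -> adj ustar a by move=> a; rewrite inE.
have WnN : forall w, w \in W -> (w != ustar) && (w \notin N).
  by move=> w; rewrite !inE negb_or.
have Ugood : forall w, w \in U -> exists a, [/\ a \in Aplus, adj w a &
    forall b, b \in Aplus -> adj w b -> b = a].
  move=> w; rewrite inE => /andP[_ /cards1P [a ha]].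
  have : a \in [set a in Aplus | adj w a] by rewrite ha set11.
  rewrite inE => /andP[aA wa].
  exists a; split => //.
  - move=> b bA wb.
    have : b \in [set a in Aplus | adj w a] by rewrite inE bA wb.
    by rewrite ha inE => /eqP.
split.
  rewrite /e_between.
  set S := [set p : T * T | _].
  rewrite -(card_in_imset (f := snd) (D := S)); last first.
    move=> [a w] [a' w'] /=; rewrite inE /= => /and3P[aA wW aw]; rewrite inE /= => /and3P[aA' wW' aw'] ew.
    subst w'; congr pair.
    move/card_le1_eqP: (hle1 w wW) => h.
    by apply: h; rewrite inE ?aA ?aA' sym ?aw ?aw'.
  suff -> : [set x.2 | x in S] = U by []; apply/setP => w; apply/imsetP/idP.
  - case=> -[a w'] /=; rewrite inE /= => /and3P[aA wW aw] ->.
    rewrite inE wW /= eqn_leq hle1 //=.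
    by apply/card_gt0P; exists a; rewrite inE aA sym.
  - move=> wU; have [a [aA wa _]] := Ugood w wU.
    exists (a, w) => //; rewrite inE /= aA sym wa andbT.
    by move: wU; rewrite inE => /andP[].
have indU : independent adj U.
  apply/forallP => w; apply/implyP => wU; apply/forallP => w'; apply/implyP => w'U.
  apply/negP => ww'.
  have wW : w \in W by move: wU; rewrite inE => /andP[].
  have w'W : w' \in W by move: w'U; rewrite inE => /andP[].
  have [a [aA wa _]] := Ugood w wU.
  have [a' [aA' wa' _]] := Ugood w' w'U.
  have ww'ne : w != w' by apply: contraTneq ww' => ->; rewrite irr.
  move/andP: (WnN w wW) => [wu wN].
  move/andP: (WnN w' w'W) => [w'u w'N].
  have aN := AN a aA.
  have a'N := AN a' aA'.
  have neqN : forall x y, x \in N -> y \notin N -> x != y.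
    by move=> x y xN yN; apply: contraNneq yN => <-.
  have [b [c [bA cA0 ba ca bc]]] := @two_others _ _ _ cA aA.
  have bN := AN b bA. have cN := AN c cA0.
  have uN : ustar \notin N by rewrite inE irr.
  apply: hfree.
  case: (eqVneq a a') => [eaa' | naa'].
  - subst a'.
    exists a, b, ustar, c, w, w'; split.
      rewrite /= !inE !negb_or eq_sym ba /= (neqN a ustar) //= (neqN a w) //=.
      rewrite (neqN a w') //= (neqN b ustar) //= bc (neqN b w) //= (neqN b w') //=.
      by rewrite eq_sym ca eq_sym (neqN c ustar) // eq_sym wu eq_sym w'u (neqN c w) // (neqN c w') // ww'ne.
    split.
    + by apply: kA; rewrite // eq_sym.
    + by rewrite sym; apply: Nu.
    + by apply: Nu.
    + by apply: kA.
    + by split; rewrite // sym.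
  - have [b' [c' [b'A c'A /and4P[b'a c'a b'a' c'a'] b'c']]] := @two_others2 _ _ _ _ cA aA aA' naa'.
    have b'N := AN b' b'A. have c'N := AN c' c'A.
    exists a, w, w', a', b', c'; split.
      rewrite /= !inE !negb_or (neqN a w) //= (neqN a w') //= naa' eq_sym b'a eq_sym c'a /=.
      rewrite ww'ne eq_sym (neqN a' w) // eq_sym (neqN b' w) // eq_sym (neqN c' w) //=.
      rewrite eq_sym (neqN a' w') // eq_sym (neqN b' w') // eq_sym (neqN c' w') //=.
      by rewrite eq_sym b'a' eq_sym c'a' b'c'.
    split.
    + by rewrite sym.
    + done.
    + by [].
    + by apply: kA; rewrite // eq_sym.
    + by split; [apply: kA; rewrite // eq_sym | apply: kA | apply: kA].
rewrite /alpha_in.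
apply: (leq_bigmax_cond (F := fun S : {set T} => #|S|) (P := fun S : {set T} => (S \subset W) && independent adj S) U).
rewrite indU andbT; apply/subsetP => w; rewrite inE => /andP[] //.
Qed.
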